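(* For any $n\geq 2$, $\mathbf{D}_n=(D_n,<)$ is not ultrahomogeneous.
   Context: Fix $n\geq 2$ and a set $D_n\subseteq\mathbb{Q}^n$ which is dense in $\mathbb{Q}^n$ (product topology) and such that no two distinct points of $D_n$ share a common coordinate; $<$ is the product order ($\mathbf{a}<\mathbf{b}$ iff $a_i\leq b_i$ for all $i$ and $\mathbf{a}\neq\mathbf{b}$). A structure is ultrahomogeneous if every isomorphism between finite substructures extends to an automorphism of the whole structure. *)

(* Defs.v *)
From mathcomp Require Import all_boot all_order all_algebra.
Set Implicit Arguments. Unset Strict Implicit. Unset Printing Implicit Defensive.
Import Order.TTheory GRing.Theory Num.Theory.
Local Open Scope ring_scope.

Definition pt (n : nat) := {ffun 'I_n -> rat}.

Definition prod_lt (n : nat) (a b : pt n) : Prop :=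
  (forall i, a i <= b i) /\ a <> b.

(* D is dense in Q^n (product topology): D meets every nonempty basic open
   set, i.e. every open box prod_i (a_i, b_i) with a_i < b_i. *)
Definition dense_in (n : nat) (D : pt n -> Prop) : Prop :=
  forall a b : pt n, (forall i, a i < b i) ->
    exists d, D d /\ forall i, a i < d i /\ d i < b i.

Definition no_common_coord (n : nat) (D : pt n -> Prop) : Prop :=
  forall x y, D x -> D y -> x <> y -> forall i, x i <> y i.

Definition finite_partial_iso (n : nat) (D : pt n -> Prop)
    (A : seq (pt n)) (f : pt n -> pt n) : Prop :=
  (forall x, x \in A -> D x) /\
  (forall x, x \in A -> D (f x)) /\
  (forall x y, x \in A -> y \in A -> f x = f y -> x = y) /\
  (forall x y, x \in A -> y \in A -> (prod_lt x y <-> prod_lt (f x) (f y))).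

Definition automorphism (n : nat) (D : pt n -> Prop) (g : pt n -> pt n) : Prop :=
  (forall x, D x -> D (g x)) /\
  (forall x y, D x -> D y -> g x = g y -> x = y) /\
  (forall y, D y -> exists x, D x /\ g x = y) /\
  (forall x y, D x -> D y -> (prod_lt x y <-> prod_lt (g x) (g y))).

Definition ultrahomogeneous (n : nat) (D : pt n -> Prop) : Prop :=
  forall (A : seq (pt n)) (f : pt n -> pt n), finite_partial_iso D A f ->
    exists g, automorphism D g /\ forall x, x \in A -> g x = f x.

(* Main.v *)
Require Import Defs.
From mathcomp Require Import all_boot all_order all_algebra.
From mathcomp Require Import lra.
Set Implicit Arguments. Unset Strict Implicit. Unset Printing Implicit Defensive.
Import Order.TTheory GRing.Theory Num.Theory.
Local Open Scope ring_scope.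

Definition box (n : nat) (u0 u1 ur : rat) : pt n :=
  [ffun i : 'I_n => if (val i == 0)%N then u0 else if (val i == 1)%N then u1 else ur].

Lemma get_pt (n : nat) (D : pt n -> Prop) (i0 i1 : 'I_n) :
  val i0 = 0%N -> val i1 = 1%N -> dense_in D ->
  forall u0 u1 ur v0 v1 vr : rat, u0 < v0 -> u1 < v1 -> ur < vr ->
  exists d, D d /\ (u0 < d i0 < v0) /\ (u1 < d i1 < v1) /\
    forall i : 'I_n, (val i != 0)%N -> (val i != 1)%N -> ur < d i < vr.
Proof.
move=> h0 h1 dD u0 u1 ur v0 v1 vr l0 l1 lr.
have [|d [Dd Hd]] := dD (box n u0 u1 ur) (box n v0 v1 vr).
  by move=> i; rewrite !ffunE; case: ifP => _ //; case: ifP.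
exists d; split=> //; split; [|split].
- by have [] := Hd i0; rewrite !ffunE h0 /= => -> ->.
- by have [] := Hd i1; rewrite !ffunE h1 /= => -> ->.
- move=> i /negPf e0 /negPf e1; have [] := Hd i; rewrite !ffunE e0 e1 => -> -> //.
Qed.

Theorem proposition2p4 (n : nat) (D : pt n -> Prop) :
  (2 <= n)%N -> dense_in D -> no_common_coord D -> ~ ultrahomogeneous D.
Proof.
move=> n2 dD _ UH.
have lt0 : (0 < n)%N by apply: leq_trans n2.
have lt1 : (1 < n)%N by [].
pose i0 := Ordinal lt0; pose i1 := Ordinal lt1.
have sp : forall i : 'I_n, i = i0 \/ i = i1 \/ ((val i != 0)%N /\ (val i != 1)%N).
  move=> i; case E0: (val i == 0)%N; first by left; apply/val_inj; apply/eqP.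
  case E1: (val i == 1)%N; first by right; left; apply/val_inj; apply/eqP.
  by right; right.
have G := get_pt (i0:=i0) (i1:=i1) erefl erefl dD.
have [a [Da [a0 [a1 ar]]]] := G 0 4 0 1 5 1 ltr01 ltac:(lra) ltr01.
have [b [Db [b0 [b1 br]]]] := G 2 2 2 3 3 3 ltac:(lra) ltac:(lra) ltac:(lra).
have [c [Dc [c0 [c1 cr]]]] := G 4 0 0 5 1 1 ltac:(lra) ltr01 ltr01.
have [x [Dx [x0 [x1 xr]]]] := G 1 (-1) (-2) 2 0 (-1) ltac:(lra) ltac:(lra) ltac:(lra).
move: a0 a1 b0 b1 c0 c1 x0 x1 => /andP[a0 a0'] /andP[a1 a1'] /andP[b0 b0'] /andP[b1 b1']
  /andP[c0 c0'] /andP[c1 c1'] /andP[x0 x0'] /andP[x1 x1'].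
have nab : ~ prod_lt a b by move=> [H _]; have := H i1; lra.
have nba : ~ prod_lt b a by move=> [H _]; have := H i0; lra.
have nac : ~ prod_lt a c by move=> [H _]; have := H i1; lra.
have nca : ~ prod_lt c a by move=> [H _]; have := H i0; lra.
have nbc : ~ prod_lt b c by move=> [H _]; have := H i1; lra.
have ncb : ~ prod_lt c b by move=> [H _]; have := H i0; lra.
have nxx : forall y : pt n, ~ prod_lt y y by move=> y H; exact: H.2 erefl.
have neab : a != b by apply/eqP=> E; have := a0'; rewrite E; lra.
have neac : a != c by apply/eqP=> E; have := a0'; rewrite E; lra.
have nebc : b != c by apply/eqP=> E; have := b0'; rewrite E; lra.
have neba : b != a by rewrite eq_sym.
have neca : c != a by rewrite eq_sym.
have necb : c != b by rewrite eq_sym.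
pose f := fun y => if y == a then b else if y == b then a else y.
have fa : f a = b by unfold f; rewrite eqxx.
have fb : f b = a by unfold f; rewrite (negPf neba) eqxx.
have fc : f c = c by unfold f; rewrite (negPf neca) (negPf necb).
have inA : forall y, y \in [:: a; b; c] -> y = a \/ y = b \/ y = c.
  by move=> y; rewrite !inE => /or3P[] /eqP; auto.
have [|g [[gD [_ [gS gI]]] gf]] := UH [:: a; b; c] f.
  split; [|split; [|split]].
  - by move=> y /inA [->|[->|->]].
  - by move=> y /inA [->|[->|->]]; rewrite ?fa ?fb ?fc.
  - move=> y z /inA [->|[->|->]] /inA [->|[->|->]]; rewrite ?fa ?fb ?fc //;
    move=> E; by [move: neab; rewrite E eqxx|move: neac; rewrite E eqxx|move: nebc; rewrite E eqxx|move: neba; rewrite E eqxx|move: neca; rewrite E eqxx|move: necb; rewrite E eqxx].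
  - move=> y z /inA [->|[->|->]] /inA [->|[->|->]]; rewrite ?fa ?fb ?fc;
    split=> H; exfalso; by [apply: nxx H|apply: nab H|apply: nba H|apply: nac H|apply: nca H|apply: nbc H|apply: ncb H].
have ga : g a = b by rewrite gf ?inE ?eqxx.
have gb : g b = a by rewrite gf ?inE ?eqxx ?orbT.
have gc : g c = c by rewrite gf ?inE ?eqxx ?orbT.
have [y [Dy gy]] := gS x Dx.
have xb : prod_lt x b.
  split; last by move=> E; have := x0'; rewrite E; lra.
  move=> i; have [->|[->|[e0 e1]]] := sp i; try lra.
  by have := xr i e0 e1; have := br i e0 e1; case/andP=> ? ? /andP[? ?]; lra.
have xc : prod_lt x c.
  split; last by move=> E; have := x0'; rewrite E; lra.
  move=> i; have [->|[->|[e0 e1]]] := sp i; try lra.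
  by have := xr i e0 e1; have := cr i e0 e1; case/andP=> ? ? /andP[? ?]; lra.
have ya : prod_lt y a by apply/(gI y a Dy Da); rewrite gy ga.
have yc : prod_lt y c by apply/(gI y c Dy Dc); rewrite gy gc.
have yb : prod_lt y b.
  split; last by move=> E; apply: nba; rewrite -E.
  move=> i; have [Ha _] := ya; have [Hc _] := yc.
  have [->|[->|[e0 e1]]] := sp i.
  - by have := Ha i0; lra.
  - by have := Hc i1; lra.
  - by have := Ha i; have := ar i e0 e1; have := br i e0 e1;
       case/andP=> ? ? /andP[? ?]; lra.
have := (gI y b Dy Db).1 yb; rewrite gy gb => -[H _].
by have := H i0; lra.
Qed.
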